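(* Let $l\in\mathbb N-\frac12$ and let $\Phi_l:U(\tilde{\mathfrak g}^{(l)})\to U(\tilde{\mathcal H}^{(l)})_{(z)}$ be the algebra homomorphism which is the identity on $U(\tilde{\mathcal H}^{(l)})$ and sends $e,f,h$ to $E,F,H$ respectively. For a $\tilde{\mathcal H}^{(l)}$-module $M$ let $\mathcal F(M)$ be the $\tilde{\mathfrak g}^{(l)}$-module obtained from the $U(\tilde{\mathcal H}^{(l)})_{(z)}$-module $U(\tilde{\mathcal H}^{(l)})_{(z)}\otimes_{U(\tilde{\mathcal H}^{(l)})}M$ by pulling back along $\Phi_l$. Then $\mathcal F$ is a functor from $\tilde{\mathcal H}^{(l)}$-modules to $\tilde{\mathfrak g}^{(l)}$-modules such that $\mathcal F(M)=0$ for every simple $\tilde{\mathcal H}^{(l)}$-module $M$ on which $z$ acts as $0$, and $\mathcal F(M)$ is a simple $\tilde{\mathfrak g}^{(l)}$-module for every simple $\tilde{\mathcal H}^{(l)}$-module $M$ on which $z$ acts as a nonzero scalar.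
   Context: For $l\in\mathbb N-\frac12=\{\frac12,\frac32,\dots\}$, $\tilde{\mathfrak g}^{(l)}$ is the complex Lie algebra with basis $e,h,f,p_0,\dots,p_{2l},z$ and brackets $[h,e]=2e$, $[h,f]=-2f$, $[e,f]=h$, $[h,p_k]=2(l-k)p_k$, $[e,p_k]=kp_{k-1}$, $[f,p_k]=(2l-k)p_{k+1}$ (with $p_{-1}=p_{2l+1}=0$), $z$ central, and $[p_k,p_{k'}]=\delta_{k+k',2l}(-1)^{k+l+\frac12}k!(2l-k)!\,z$. $\tilde{\mathcal H}^{(l)}=\mathrm{span}\{p_0,\dots,p_{2l},z\}$. $U(\tilde{\mathcal H}^{(l)})_{(z)}$ is the localization of $U(\tilde{\mathcal H}^{(l)})$ at $\{z^i:i\ge0\}$. The elements $E,F,H\in U(\tilde{\mathcal H}^{(l)})_{(z)}$ are $E=\frac{1}{z}\sum_{k=1}^{2l}(-1)^{k+l+\frac12}\frac{l-k}{(k-1)!(2l-k)!}p_{k-1}p_{2l-k}$, $F=\frac{1}{z}\sum_{k=1}^{2l}(-1)^{k+l-\frac12}\frac{l-k}{(k-1)!(2l-k)!}p_{k}p_{2l-k+1}$, $H=\frac{2}{z}\sum_{k=0}^{l-\frac12}(-1)^{k+l-\frac12}\frac{l-k}{k!(2l-k)!}p_{2l-k}p_k-\frac{(l+\frac12)^2}{2}$; it is given that $\Phi_l$ is a well-defined algebra homomorphism. *)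

(* Defs.v *)
From HB Require Import structures.
From mathcomp Require Import all_boot all_order all_algebra.
Set Implicit Arguments. Unset Strict Implicit. Unset Printing Implicit Defensive.
Import Order.TTheory GRing.Theory Num.Theory.
Local Open Scope ring_scope.

(* Convention: l = n + 1/2 with n : nat, so 2l = twol n = 2n+1 and
   l + 1/2 = n+1, l - 1/2 = n.  Indices k of p_k range over 0..twol n. *)
Definition twol (n : nat) : nat := n.*2.+1.

Inductive gbasis := Be | Bh | Bf | Bp of nat | Bz.

Definition gvalid (n : nat) (b : gbasis) : bool :=
  match b with Bp k => (k <= twol n)%N | _ => true end.

Section Defs.
Variable K : fieldType.

Definition sgn (k : nat) : K := (-1) ^+ k.

(* coefficient of z in [p_k, p_k'] *)
Definition pbr (n k k' : nat) : K :=
  if (k + k' == twol n)%N then sgn (k + n.+1)%N * (k`! * (twol n - k)`!)%N%:R else 0.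

(* l - k as an element of K *)
Definition lmk (n k : nat) : K := ((twol n)%:R - (k.*2)%:R) / 2%:R.

Variable V : lmodType K.

Definition Hmod_axioms (n : nat) (p : nat -> V -> V) (z : V -> V) : Prop :=
  [/\ forall k, (k <= twol n)%N -> forall (a : K) u v, p k (a *: u + v) = a *: p k u + p k v,
      forall (a : K) u v, z (a *: u + v) = a *: z u + z v,
      forall k v, (k <= twol n)%N -> z (p k v) = p k (z v) &
      forall k k' v, (k <= twol n)%N -> (k' <= twol n)%N ->
        p k (p k' v) - p k' (p k v) = pbr n k k' *: z v].

Definition Hsubmod n (p : nat -> V -> V) (z : V -> V) (S : V -> Prop) : Prop :=
  [/\ S 0, forall (a : K) u v, S u -> S v -> S (a *: u + v),
      forall k v, (k <= twol n)%N -> S v -> S (p k v) &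
      forall v, S v -> S (z v)].

Definition Hsimple n (p : nat -> V -> V) (z : V -> V) : Prop :=
  (exists v : V, v != 0) /\
  forall S, Hsubmod n p z S -> (exists v, S v /\ v != 0) -> forall v, S v.

(* The localization U(H)_(z) (x)_{U(H)} M, realised as fractions z^{-k} m,
   represented by pairs (k, m). *)
Definition loc := (nat * V)%type.

Definition loc_eq (z : V -> V) (x y : loc) : Prop :=
  exists j : nat, iter (j + y.1) z x.2 = iter (j + x.1) z y.2.

Definition loc_zero : loc := (0%N, 0).
Definition loc_add (z : V -> V) (x y : loc) : loc :=
  ((x.1 + y.1)%N, iter y.1 z x.2 + iter x.1 z y.2).
Definition loc_scale (a : K) (x : loc) : loc := (x.1, a *: x.2).

(* numerators of E, F, H (i.e. z*E, z*F, and the quadratic part of z*H) *)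
Definition Enum n (p : nat -> V -> V) (v : V) : V :=
  \sum_(1%N <= k < (twol n).+1)
     ((sgn (k + n.+1)%N * lmk n k / ((k.-1)`! * (twol n - k)`!)%N%:R)
        *: p k.-1 (p (twol n - k)%N v)).

Definition Fnum n (p : nat -> V -> V) (v : V) : V :=
  \sum_(1%N <= k < (twol n).+1)
     ((sgn (k + n)%N * lmk n k / ((k.-1)`! * (twol n - k)`!)%N%:R)
        *: p k (p ((twol n - k)%N.+1) v)).

Definition Hnum n (p : nat -> V -> V) (v : V) : V :=
  2%:R *: \sum_(0%N <= k < n.+1)
     ((sgn (k + n)%N * lmk n k / (k`! * (twol n - k)`!)%N%:R)
        *: p (twol n - k)%N (p k v)).

(* the constant (l+1/2)^2/2 *)
Definition Hconst (n : nat) : K := (n.+1 ^ 2)%:R / 2%:R.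

(* action of g~ on F(M) obtained by pulling back along Phi_l *)
Definition gact n (p : nat -> V -> V) (z : V -> V) (b : gbasis) (x : loc) : loc :=
  match b with
  | Be => (x.1.+1, Enum n p x.2)
  | Bf => (x.1.+1, Fnum n p x.2)
  | Bh => (x.1.+1, Hnum n p x.2 - Hconst n *: z x.2)
  | Bp k => (x.1, p k x.2)
  | Bz => (x.1, z x.2)
  end.

End Defs.

(* Lie bracket of g~^{(l)} on basis elements, as a linear combination *)
Definition gbracket (K : fieldType) (n : nat) (b b' : gbasis) : seq (K * gbasis) :=
  match b, b' with
  | Bh, Be => [:: (2%:R, Be)]
  | Be, Bh => [:: (- 2%:R, Be)]
  | Bh, Bf => [:: (- 2%:R, Bf)]
  | Bf, Bh => [:: (2%:R, Bf)]
  | Be, Bf => [:: (1, Bh)]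
  | Bf, Be => [:: (-1, Bh)]
  | Bh, Bp k => [:: (2%:R * lmk K n k, Bp k)]
  | Bp k, Bh => [:: (- (2%:R * lmk K n k), Bp k)]
  | Be, Bp k => [:: (k%:R, Bp k.-1)]
  | Bp k, Be => [:: (- k%:R, Bp k.-1)]
  | Bf, Bp k => [:: ((twol n - k)%N%:R, Bp k.+1)]
  | Bp k, Bf => [:: (- (twol n - k)%N%:R, Bp k.+1)]
  | Bp k, Bp k' => [:: (pbr K n k k', Bz)]
  | _, _ => [::]
  end.

Section Defs2.
Variable K : fieldType.
Variable V : lmodType K.

Definition lincomb_act n (p : nat -> V -> V) (z : V -> V) (c : seq (K * gbasis)) (x : loc V)
  : loc V :=
  foldr (fun cb acc => loc_add z (loc_scale cb.1 (gact n p z cb.2 x)) acc) (loc_zero V) c.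

Definition gmod_brackets n (p : nat -> V -> V) (z : V -> V) : Prop :=
  forall b b' x, gvalid n b -> gvalid n b' ->
    loc_eq z (loc_add z (gact n p z b (gact n p z b' x))
                        (loc_scale (-1) (gact n p z b' (gact n p z b x))))
             (lincomb_act n p z (gbracket K n b b') x).

Definition gmod_struct n (p : nat -> V -> V) (z : V -> V) : Prop :=
  [/\ forall b x y, gvalid n b -> loc_eq z x y -> loc_eq z (gact n p z b x) (gact n p z b y),
      forall b (a : K) x y, gvalid n b ->
        loc_eq z (gact n p z b (loc_add z (loc_scale a x) y))
                 (loc_add z (loc_scale a (gact n p z b x)) (gact n p z b y)) &
      gmod_brackets n p z].

Definition gsubmod n (p : nat -> V -> V) (z : V -> V) (S : loc V -> Prop) : Prop :=
  [/\ forall x y, loc_eq z x y -> S x -> S y,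
      S (loc_zero V),
      forall (a : K) x y, S x -> S y -> S (loc_add z (loc_scale a x) y) &
      forall b x, gvalid n b -> S x -> S (gact n p z b x)].

Definition gsimple n (p : nat -> V -> V) (z : V -> V) : Prop :=
  (exists x, ~ loc_eq z x (loc_zero V)) /\
  forall S, gsubmod n p z S -> (exists x, S x /\ ~ loc_eq z x (loc_zero V)) -> forall x, S x.

Definition loc_trivial (z : V -> V) : Prop := forall x, loc_eq z x (loc_zero V).

End Defs2.

Definition Hmod_hom (K : fieldType) (V W : lmodType K) n
  (p : nat -> V -> V) (z : V -> V) (p' : nat -> W -> W) (z' : W -> W) (phi : V -> W) : Prop :=
  [/\ forall (a : K) u v, phi (a *: u + v) = a *: phi u + phi v,
      forall k v, (k <= twol n)%N -> phi (p k v) = p' k (phi v) &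
      forall v, phi (z v) = z' (phi v)].

(* F on morphisms: z^{-k} m |-> z^{-k} phi(m), i.e. id (x) phi *)
Definition loc_map (K : fieldType) (V W : lmodType K) (phi : V -> W) (x : loc V) : loc W :=
  (x.1, phi x.2).

Definition gmod_hom (K : fieldType) (V W : lmodType K) n
  (p : nat -> V -> V) (z : V -> V) (p' : nat -> W -> W) (z' : W -> W)
  (F : loc V -> loc W) : Prop :=
  [/\ forall x y, loc_eq z x y -> loc_eq z' (F x) (F y),
      forall (a : K) x y, loc_eq z' (F (loc_add z (loc_scale a x) y))
                                    (loc_add z' (loc_scale a (F x)) (F y)) &
      forall b x, gvalid n b -> loc_eq z' (F (gact n p z b x)) (gact n p' z' b (F x))].

(* Standing assumption of the paper: Phi_l is a well-defined algebra
   homomorphism, i.e. E, F, H together with the p_k, z satisfy the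
   bracket relations of g~ (in U(H~)_(z), hence on every localized module). *)
Definition Phi_hom (K : fieldType) (n : nat) : Prop :=
  forall (V : lmodType K) (p : nat -> V -> V) (z : V -> V),
    Hmod_axioms n p z -> gmod_brackets n p z.

(* Main.v *)
Require Import Defs.
From HB Require Import structures.
From mathcomp Require Import all_boot all_order all_algebra zify.
Set Implicit Arguments. Unset Strict Implicit. Unset Printing Implicit Defensive.
Import GRing.Theory Num.Theory.
Local Open Scope ring_scope.

Section Gen.
Variable K : fieldType.

Definition lin (V W : lmodType K) (T : V -> W) :=
  forall (a : K) u v, T (a *: u + v) = a *: T u + T v.
Definition intw (V W : lmodType K) (phi : V -> W) (T : V -> V) (T' : W -> W) :=
  forall v, phi (T v) = T' (phi v).

Section L.
Variables V W : lmodType K.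
Implicit Types (T : V -> W).

Lemma lin0 T : lin T -> T 0 = 0.
Proof.
move=> H; have E := H 1 0 0; rewrite scaler0 add0r scale1r in E.
have : T 0 + T 0 - T 0 = T 0 - T 0 by rewrite -E.
by rewrite addrK subrr.
Qed.

Lemma linD T : lin T -> forall u v, T (u + v) = T u + T v.
Proof. by move=> H u v; have := H 1 u v; rewrite !scale1r. Qed.

Lemma linZ T : lin T -> forall a u, T (a *: u) = a *: T u.
Proof. by move=> H a u; have := H a u 0; rewrite !addr0 (lin0 H) addr0. Qed.

Lemma lin_sum T : lin T -> forall I (r : seq I) (F : I -> V),
  T (\sum_(i <- r) F i) = \sum_(i <- r) T (F i).
Proof. by move=> H I r F; apply: (big_morph T (linD H) (lin0 H)). Qed.
End L.

Lemma scalerC' (V : lmodType K) (a b : K) (v : V) : a *: (b *: v) = b *: (a *: v).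
Proof. by rewrite !scalerA mulrC. Qed.

Section O.
Variable V : lmodType K.
Implicit Types (T S z : V -> V).

Lemma lin_sub T S : lin T -> lin S -> lin (fun v => T v - S v).
Proof.
move=> HT HS a u v; rewrite HT HS scalerBr opprD.
by rewrite [LHS]addrACA.
Qed.

Lemma lin_scale (c : K) T : lin T -> lin (fun v => c *: T v).
Proof. by move=> HT a u v; rewrite HT scalerDr scalerC'. Qed.

Lemma iter_lin z k : lin z -> lin (iter k z).
Proof.
move=> Hz; elim: k => [|k IH] a u v //=.
by rewrite IH Hz.
Qed.

Lemma iter_comm z T : intw z T T -> forall k v, iter k z (T v) = T (iter k z v).
Proof. by move=> H; elim=> [|k IH] v //=; rewrite IH H. Qed.

Lemma intw_sub (W : lmodType K) (phi : V -> W) T S (T' S' : W -> W) :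
  lin phi -> intw phi T T' -> intw phi S S' ->
  intw phi (fun v => T v - S v) (fun w => T' w - S' w).
Proof.
move=> Hp HT HS v; have := Hp (-1) (S v) (T v).
by rewrite addrC scaleN1r => ->; rewrite scaleN1r HT HS addrC.
Qed.

Lemma intw_scale (W : lmodType K) (phi : V -> W) (c : K) T (T' : W -> W) :
  lin phi -> intw phi T T' -> intw phi (fun v => c *: T v) (fun w => c *: T' w).
Proof. by move=> Hp HT v; rewrite (linZ Hp) HT. Qed.

Lemma iter_intw (W : lmodType K) (phi : V -> W) z (z' : W -> W) :
  intw phi z z' -> forall k v, phi (iter k z v) = iter k z' (phi v).
Proof. by move=> H; elim=> [|k IH] v //=; rewrite H IH. Qed.

Lemma act_wd z T (act : loc V -> loc V) s :
  (forall w, act w = (w.1 + s, T w.2)%N) -> intw z T T ->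
  forall x y, loc_eq z x y -> loc_eq z (act x) (act y).
Proof.
move=> Ha HT x y [j E]; exists j; rewrite !Ha /=.
have -> : (j + (y.1 + s) = s + (j + y.1))%N by lia.
have -> : (j + (x.1 + s) = s + (j + x.1))%N by lia.
by rewrite !(iterD s) (iter_comm HT (j + y.1)) (iter_comm HT (j + x.1)) E.
Qed.

Lemma act_lin z T (act : loc V -> loc V) s :
  (forall w, act w = (w.1 + s, T w.2)%N) -> lin z -> lin T -> intw z T T ->
  forall a x y, loc_eq z (act (loc_add z (loc_scale a x) y))
                        (loc_add z (loc_scale a (act x)) (act y)).
Proof.
move=> Ha Hz HT HTz a x y; exists 0%N; rewrite !Ha /=.
rewrite (linD HT) (linZ (iter_lin _ Hz)) (linZ HT) -!(iter_comm HTz).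
rewrite !(linD (iter_lin _ Hz)) !(linZ (iter_lin _ Hz)) -!iterD.
congr (_ *: iter _ z _ + iter _ z _); lia.
Qed.

End O.
End Gen.

Section Num.
Variable K : fieldType.
Variable n : nat.
Variables V W : lmodType K.
Variable p : nat -> V -> V.
Variable p' : nat -> W -> W.
Hypothesis hp : forall k, (k <= twol n)%N -> lin (p k).

Lemma lin_Enum : lin (Enum n p).
Proof.
move=> a u v; rewrite /Enum scaler_sumr -big_split; apply: eq_big_seq => k.
rewrite mem_index_iota => /andP[k1 k2] /=.
rewrite (hp (k := (twol n - k)%N)); last by lia.
rewrite (hp (k := k.-1)); last by lia.
by rewrite scalerDr scalerC'.
Qed.

Lemma lin_Fnum : lin (Fnum n p).
Proof.
move=> a u v; rewrite /Fnum scaler_sumr -big_split; apply: eq_big_seq => k.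
rewrite mem_index_iota => /andP[k1 k2] /=.
rewrite (hp (k := (twol n - k).+1)); last by lia.
rewrite (hp (k := k)); last by lia.
by rewrite scalerDr scalerC'.
Qed.

Lemma lin_Hnum : lin (Hnum n p).
Proof.
move=> a u v; rewrite /Hnum scalerC' -scalerDr; congr (_ *: _).
rewrite scaler_sumr -big_split; apply: eq_big_seq => k.
rewrite mem_index_iota => /andP[k1 k2] /=.
rewrite (hp (k := k)); last by rewrite /twol; lia.
rewrite (hp (k := (twol n - k)%N)); last by lia.
by rewrite scalerDr scalerC'.
Qed.

Variable phi : V -> W.
Hypothesis hphi : lin phi.
Hypothesis hint : forall k, (k <= twol n)%N -> intw phi (p k) (p' k).

Lemma intw_Enum : intw phi (Enum n p) (Enum n p').
Proof.
move=> v; rewrite /Enum (lin_sum hphi); apply: eq_big_seq => k.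
rewrite mem_index_iota => /andP[k1 k2] /=.
rewrite (linZ hphi) (hint (k := k.-1)); last by lia.
by rewrite (hint (k := (twol n - k)%N)); last by lia.
Qed.

Lemma intw_Fnum : intw phi (Fnum n p) (Fnum n p').
Proof.
move=> v; rewrite /Fnum (lin_sum hphi); apply: eq_big_seq => k.
rewrite mem_index_iota => /andP[k1 k2] /=.
rewrite (linZ hphi) (hint (k := k)); last by lia.
by rewrite (hint (k := (twol n - k).+1)); last by lia.
Qed.

Lemma intw_Hnum : intw phi (Hnum n p) (Hnum n p').
Proof.
move=> v; rewrite /Hnum (linZ hphi) (lin_sum hphi); congr (_ *: _); apply: eq_big_seq => k.
rewrite mem_index_iota => /andP[k1 k2] /=.
rewrite (linZ hphi) (hint (k := (twol n - k)%N)); last by lia.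
by rewrite (hint (k := k)); last by rewrite /twol; lia.
Qed.
End Num.

Lemma loc_eq_refl (K : fieldType) (V : lmodType K) (z : V -> V) x : loc_eq z x x.
Proof. by exists 0%N. Qed.

Lemma gact_form (K : fieldType) (V : lmodType K) n (p : nat -> V -> V) (z : V -> V) b :
  Hmod_axioms n p z -> gvalid n b ->
  exists s (T : V -> V), (forall w, gact n p z b w = (w.1 + s, T w.2)%N) /\ lin T /\ intw z T T.
Proof.
move=> [Hp Hz Hzp _] hb.
have Hpz : forall k, (k <= twol n)%N -> intw z (p k) (p k) by move=> k hk v; exact: Hzp.
have Hzz : intw z z z by [].
case: b hb => [|||k|] /= hb.
- exists 1%N, (Enum n p); split; first by move=> w; rewrite addn1.
  by split; [exact: (lin_Enum Hp) | exact: (intw_Enum Hz Hpz)].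
- exists 1%N, (fun v => Hnum n p v - Hconst K n *: z v); split; first by move=> w; rewrite addn1.
  split; first exact: (lin_sub (lin_Hnum Hp) (lin_scale _ Hz)).
  exact: (intw_sub Hz (intw_Hnum Hz Hpz) (intw_scale _ Hz Hzz)).
- exists 1%N, (Fnum n p); split; first by move=> w; rewrite addn1.
  by split; [exact: (lin_Fnum Hp) | exact: (intw_Fnum Hz Hpz)].
- exists 0%N, (p k); split; first by move=> w; rewrite addn0.
  by split; [exact: Hp | exact: Hpz].
- exists 0%N, z; split; first by move=> w; rewrite addn0.
  by split.
Qed.

Lemma iter_c (K : fieldType) (V : lmodType K) (z : V -> V) (c : K) :
  (forall v, z v = c *: v) -> forall k v, iter k z v = c ^+ k *: v.
Proof.
move=> Hc; elim=> [|k IH] v /=; first by rewrite expr0 scale1r.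
by rewrite IH Hc scalerA exprS.
Qed.

Theorem theorem1 (K : numClosedFieldType) (n : nat) (HPhi : Phi_hom K n) :
  (* F(M) is a g~-module for every H~-module M *)
  (forall (V : lmodType K) (p : nat -> V -> V) (z : V -> V),
      Hmod_axioms n p z -> gmod_struct n p z) /\
  (* F maps H~-module morphisms to g~-module morphisms ... *)
  (forall (V W : lmodType K) (p : nat -> V -> V) (z : V -> V)
          (p' : nat -> W -> W) (z' : W -> W) (phi : V -> W),
      Hmod_axioms n p z -> Hmod_axioms n p' z' -> Hmod_hom n p z p' z' phi ->
      gmod_hom n p z p' z' (loc_map phi)) /\
  (* ... functorially *)
  (forall (V : lmodType K) (x : loc V), loc_map id x = x) /\
  (forall (U V W : lmodType K) (phi : U -> V) (psi : V -> W) (x : loc U),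
      loc_map (psi \o phi) x = loc_map psi (loc_map phi x)) /\
  (* F(M) = 0 for simple M with z acting as 0 *)
  (forall (V : lmodType K) (p : nat -> V -> V) (z : V -> V),
      Hmod_axioms n p z -> Hsimple n p z -> (forall v, z v = 0) -> loc_trivial z) /\
  (* F(M) simple for simple M with z acting as a nonzero scalar *)
  (forall (V : lmodType K) (p : nat -> V -> V) (z : V -> V) (c : K),
      Hmod_axioms n p z -> Hsimple n p z -> c != 0 -> (forall v, z v = c *: v) ->
      gsimple n p z).
Proof.
split.
  move=> V p z Hax; have Hz : lin z by case: Hax.
  split; last exact: HPhi.
  - move=> b x y hb; have [s [T [Ha [_ HT]]]] := gact_form Hax hb.
    exact: (act_wd Ha HT).
  - move=> b a x y hb; have [s [T [Ha [LT HT]]]] := gact_form Hax hb.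
    exact: (act_lin Ha Hz LT HT).
split.
  move=> V W p z p' z' phi [Hp Hz Hzp _] [Hp' Hz' Hzp' _] [Hphi Hphip Hphiz].
  have Hphiz' : intw phi z z' by [].
  have Hint : forall k, (k <= twol n)%N -> intw phi (p k) (p' k) by move=> k hk v; exact: Hphip.
  split.
  - move=> x y [j E]; exists j => /=; by rewrite -!(iter_intw Hphiz') E.
  - move=> a x y; exists 0%N => /=.
    by rewrite (linD Hphi) !(iter_intw Hphiz') (linZ Hphi).
  - case=> [|||k|] x hb; rewrite /loc_map /=.
    + rewrite (intw_Enum Hphi Hint); exact: loc_eq_refl.
    + have E := intw_sub Hphi (intw_Hnum Hphi Hint) (intw_scale (Hconst K n) Hphi Hphiz') x.2.
      rewrite /= in E; rewrite E.
      exact: loc_eq_refl.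
    + rewrite (intw_Fnum Hphi Hint); exact: loc_eq_refl.
    + rewrite Hphip //; exact: loc_eq_refl.
    + rewrite Hphiz; exact: loc_eq_refl.
split; first by move=> V [].
split; first by move=> U V W phi psi [].
split.
  move=> V p z Hax _ Hz0 x; exists 1%N.
  by rewrite addn0 add1n /= !Hz0.
move=> V p z c Hax [[v0 nv0] Hsimp] cne0 Hc.
have Hic := iter_c Hc.
split.
  exists (0%N, v0) => -[j]; rewrite /= !Hic scaler0 => /eqP.
  rewrite scaler_eq0 expf_eq0 (negbTE cne0) andbF /=.
  by apply/negP.
move=> S [Ssub HS0 Slin Sact] [x [Sx nx]].
pose S' := fun v => S (0%N, v).
have HS' : Hsubmod n p z S'.
  split.
  - exact: HS0.
  - move=> a u v Su Sv; exact: (Slin a (0%N, u) (0%N, v) Su Sv).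
  - move=> k v hk Sv; exact: (Sact (Bp k) (0%N, v) hk Sv).
  - move=> v Sv; exact: (Sact Bz (0%N, v) isT Sv).
have Sit : forall m, S (x.1, iter m z x.2).
  elim=> [|m IH]; first by case: x Sx nx.
  exact: (Sact Bz _ isT IH).
have S'x : S' x.2.
  apply: (Ssub _ _ _ (Sit x.1)); exists 0%N => /=.
  by rewrite add0n.
have nx2 : x.2 != 0.
  apply/negP => /eqP e; apply: nx; exists 0%N; rewrite e /= !Hic !scaler0.
  by [].
have allS' := Hsimp S' HS' (ex_intro _ x.2 (conj S'x nx2)).
move=> y; apply: (Ssub (0%N, (c ^+ y.1)^-1 *: y.2)); last exact: allS'.
exists 0%N => /=; rewrite add0n Hic scalerA divff ?scale1r //.
by rewrite expf_neq0.
Qed.
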